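(* Let $G$ be a vertex-transitive graph on $n \ge 3$ vertices whose automorphism group is abelian. Then $\frac{\lambda_3(G)}{n} \le \frac13$.
   Context: $\lambda_3(G)$ denotes the third largest eigenvalue (with multiplicity) of the adjacency matrix of $G$. *)

(* Defs.v *)
(* Eigenvalues are taken over algC (algebraic complex numbers),
   where the characteristic polynomial splits. *)
From mathcomp Require Import all_boot all_order all_algebra all_fingroup all_field.
Set Implicit Arguments. Unset Strict Implicit. Unset Printing Implicit Defensive.
Import Order.TTheory GRing.Theory Num.Theory.
Local Open Scope ring_scope.

Definition simple_graph (T : finType) (e : rel T) : Prop :=
  symmetric e /\ irreflexive e.

Definition adjmx (T : finType) (e : rel T) : 'M[algC]_#|T| :=
  \matrix_(i, j) (e (enum_val i) (enum_val j))%:R.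

Definition eigenvalues (n : nat) (A : 'M[algC]_n) : seq algC :=
  sort (fun x y : algC => y <= x)
       (sval (closed_field_poly_normal (char_poly A))).

(* k-th largest eigenvalue (1-indexed, with multiplicity). *)
Definition lambda_k (n : nat) (A : 'M[algC]_n) (k : nat) : algC :=
  nth 0 (eigenvalues A) k.-1.

Definition graph_aut (T : finType) (e : rel T) : {set {perm T}} :=
  [set s : {perm T} | [forall x, forall y, e (s x) (s y) == e x y]].

Definition vertex_transitive (T : finType) (e : rel T) : Prop :=
  forall x y : T, exists2 s, s \in graph_aut e & s x = y.

(* Main.v *)
Require Import Defs.
From mathcomp Require Import all_boot all_order all_algebra all_fingroup all_field all_character.
From mathcomp.algebra_tactics Require Import ring.
Set Implicit Arguments. Unset Strict Implicit. Unset Printing Implicit Defensive.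
Import Order.TTheory GRing.Theory Num.Theory.
Local Open Scope ring_scope.

Lemma char_poly_similar n (A D P : 'M[algC]_n) :
  P \in unitmx -> A *m P = P *m D -> char_poly A = char_poly D.
Proof.
move=> Pu AP.
pose Pp := map_mx (@polyC algC) P.
have H : char_poly_mx A *m Pp = Pp *m char_poly_mx D.
  rewrite /char_poly_mx mulmxBl mulmxBr -!map_mxM AP.
  by rewrite scalar_mxC.
have := congr1 determinant H; rewrite !det_mulmx.
have dP : \det Pp != 0.
  rewrite det_map_mx polyC_eq0 -unitfE -unitmxE //.
rewrite [RHS]mulrC => /(mulIf dP).
by [].
Qed.

Lemma cnt (T : finType) (P : pred T) : count P (index_enum T) = #|P|.
Proof. by rewrite -sum1_count -sum1_card. Qed.

Section Main.
Variables (T : finType) (e : rel T).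
Hypothesis He : simple_graph e.
Hypothesis HT : vertex_transitive e.
Hypothesis Hab : abelian (graph_aut e).
Variable v0 : T.

Lemma autP (s : {perm T}) : reflect (forall x y, e (s x) (s y) = e x y) (s \in graph_aut e).
Proof.
rewrite inE; apply: (iffP forallP) => [H x y | H x].
  by have /forallP/(_ y)/eqP := H x.
by apply/forallP => y; rewrite H.
Qed.

Lemma aut_group_set : group_set (graph_aut e).
Proof.
apply/group_setP; split; first by apply/autP => x y; rewrite !perm1.
move=> s t /autP Hs /autP Ht; apply/autP => x y.
by rewrite !permM Ht Hs.
Qed.

Definition G : {group {perm T}} := Group aut_group_set.

Lemma GE : (G : {set {perm T}}) = graph_aut e. Proof. by []. Qed.

Lemma abG : abelian G. Proof. exact: Hab. Qed.

Lemma regular (s : {perm T}) : s \in G -> s v0 = v0 -> s = 1%g.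
Proof.
move=> sG sv; apply/permP => x; rewrite perm1.
have [h hG <-] := HT v0 x.
have: commute s h by apply: (centsP abG).
move=> C; by rewrite -permM -C permM sv.
Qed.

Definition rho (x : T) : {perm T} := odflt 1%g [pick s in G | s v0 == x].

Lemma rhoP x : rho x \in G /\ rho x v0 = x.
Proof.
rewrite /rho; case: pickP => [s /andP[sG /eqP sv] | H] //=.
have [s sG sv] := HT v0 x.
by have := H s; rewrite /= sG sv eqxx.
Qed.

Lemma rhoG x : rho x \in G. Proof. by case: (rhoP x). Qed.
Lemma rhov x : rho x v0 = x. Proof. by case: (rhoP x). Qed.

Lemma rho_uniq s : s \in G -> rho (s v0) = s.
Proof.
move=> sG.
have H : (s * (rho (s v0))^-1)%g = 1%g.
  apply: regular; first by rewrite groupM ?groupV ?rhoG.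
  by rewrite permM; have := permK (rho (s v0)) v0; rewrite rhov.
by apply/esym/eqP; rewrite eq_mulgV1 H.
Qed.

Lemma invol s : s \in G -> (s^-1)%g = s.
Proof.
pose phi x := (rho x)^-1%g v0.
have phi_inj : injective phi.
  move=> x y; rewrite /phi => H.
  have: ((rho x)^-1)%g = ((rho y)^-1)%g.
    by rewrite -(rho_uniq (groupVr (rhoG x))) H rho_uniq // groupV rhoG.
  by move/invg_inj => Hr; rewrite -(rhov x) Hr rhov.
pose p := perm phi_inj.
have pG : p \in G.
  apply/autP => x y; rewrite !permE /phi.
  have Hab' : (rho x * rho y)%g \in G by rewrite groupM ?rhoG.
  move/autP: Hab' => <-.
  rewrite [in X in e X _]permM permKV.
  have -> : (rho x * rho y)%g = (rho y * rho x)%g by apply: (centsP abG); rewrite ?rhoG.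
  rewrite [in X in e _ X]permM permKV !rhov.
  by case: He => sym _; rewrite sym.
have p1 : p = 1%g.
  apply: regular => //; rewrite permE /phi.
  have -> : rho v0 = 1%g by rewrite -{1}(perm1 v0) rho_uniq.
  by rewrite invg1 perm1.
move=> sG.
have : phi (s v0) = s v0 by rewrite -permE -/p p1 perm1.
rewrite /phi rho_uniq // => H.
by rewrite -(rho_uniq (groupVr sG)) H rho_uniq.
Qed.


Lemma chi_pm (i : Iirr G) g : g \in G -> 'chi_i g = 1 \/ 'chi_i g = -1.
Proof.
move=> gG.
have lin := char_abelianP G abG i.
have := lin_charX lin 2 gG.
have -> : (g ^+ 2)%g = 1%g by rewrite expgS expg1 -{1}(invol gG) mulVg.
rewrite lin_char1 // => /esym/eqP; rewrite sqrf_eq1 => /orP[] /eqP; by [left|right].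
Qed.

Lemma chi_conj (i : Iirr G) g : g \in G -> ('chi_i g)^* = 'chi_i g.
Proof. by move=> /(chi_pm i) [] ->; rewrite ?rmorphN rmorph1. Qed.

Lemma chi_real (i : Iirr G) g : 'chi_i g \is Num.real.
Proof.
have [gG|gG] := boolP (g \in G).
  by case: (chi_pm i gG) => ->; rewrite ?rpredN rpred1.
by rewrite cfun0 // rpred0.
Qed.

Lemma sum_rho (F : {perm T} -> algC) :
  \sum_(x : T) F (rho x) = \sum_(g in G) F g.
Proof.
rewrite (reindex rho) /=; last first.
  exists (fun s => s v0) => [x _|s sG]; first by rewrite rhov.
  by rewrite rho_uniq.
by apply: eq_bigl => x; rewrite rhoG.
Qed.

Lemma cardTG : #|T| = #|G|.
Proof.
have <- : [set rho x | x in T] = G.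
  apply/setP => s; apply/imsetP/idP => [[x _ ->]|sG]; first exact: rhoG.
  by exists (s v0); rewrite ?rho_uniq.
rewrite card_imset //.
by move=> x y Hxy; rewrite -(rhov x) Hxy rhov.
Qed.

Lemma ET : #|T| = Nirr G.
Proof. by rewrite cardTG -(card_Iirr_abelian abG) card_ord. Qed.

Definition chi (k : 'I_#|T|) : 'CF(G) := 'chi_(cast_ord ET k).

Definition lam (k : 'I_#|T|) : algC := \sum_(g in G) (e v0 (g v0))%:R * chi k g.

Definition M : 'M[algC]_#|T| := \matrix_(x, k) chi k (rho (enum_val x)).

Lemma sum_enum (F : T -> algC) : \sum_(k < #|T|) F (enum_val k) = \sum_(x : T) F x.
Proof. by rewrite -big_enum_val. Qed.


Lemma chiM k g h : g \in G -> h \in G -> chi k (g * h)%g = chi k g * chi k h.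
Proof.
move=> gG hG; rewrite /chi.
exact: (lin_charM (char_abelianP G abG _)).
Qed.

Lemma eigenM : adjmx e *m M = M *m diag_mx (\row_k lam k).
Proof.
apply/matrixP => x k; rewrite mul_mx_diag !mxE.
rewrite (eq_bigr (fun y => (e (enum_val x) (enum_val y))%:R * chi k (rho (enum_val y)))); last first.
  by move=> y _; rewrite !mxE.
rewrite (sum_enum (fun z => (e (enum_val x) z)%:R * chi k (rho z))).
transitivity (\sum_(g in G) (e (enum_val x) (g v0))%:R * chi k g).
  transitivity (\sum_z (e (enum_val x) (rho z v0))%:R * chi k (rho z)).
    by apply: eq_bigr => z _; rewrite rhov.
  exact: (sum_rho (fun g => (e (enum_val x) (g v0))%:R * chi k g)).
set a := enum_val x; set r := rho a.
have rG : r \in G by apply: rhoG.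
have Ee (g : {perm T}) : e a (g v0) = e v0 ((g * r^-1)%g v0).
  have /autP <- : (r^-1)%g \in G by rewrite groupV.
  by rewrite permM -{1}(rhov a) -/r permK.
rewrite (eq_bigr (fun g => (e v0 ((g * r^-1)%g v0))%:R * chi k g)); last first.
  by move=> g _; rewrite Ee.
rewrite (reindex (fun h => (h * r)%g)) /=; last first.
  by exists (fun h => (h * r^-1)%g) => h _; rewrite ?mulgK ?mulgKV.
rewrite /lam mulr_sumr; apply: eq_big => h; first by rewrite -GE (groupMr _ rG).
move=> hG; have hG' : h \in G by rewrite -(groupMr _ rG).
by rewrite mulgK chiM // mulrA [RHS]mulrC.
Qed.

Lemma orthoM : M^T *m M = (#|T|%:R : algC)%:M.
Proof.
apply/matrixP => k l; rewrite !mxE.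
rewrite (eq_bigr (fun y => chi k (rho (enum_val y)) * chi l (rho (enum_val y)))); last first.
  by move=> y _; rewrite !mxE.
rewrite (sum_enum (fun z => chi k (rho z) * chi l (rho z))).
transitivity (\sum_(g in G) chi k g * chi l g).
  exact: (sum_rho (fun g => chi k g * chi l g)).
rewrite (eq_bigr (fun g => chi k g * (chi l g)^*)); last first.
  by move=> g gG; rewrite /chi chi_conj.
have H : '[chi k, chi l] = (k == l)%:R.
  by rewrite /chi cfdot_irr (inj_eq (@cast_ord_inj _ _ _)).
rewrite cfdotE in H.
have nG : (#|G|%:R : algC) != 0 by rewrite pnatr_eq0 -lt0n cardG_gt0.
have -> : \sum_(g in G) chi k g * (chi l g)^* = #|G|%:R * (k == l)%:R.
  by rewrite -H mulVKf.
by case: (k == l); rewrite ?mulr1 ?mulr0 ?mulr1n ?mulr0n ?cardTG.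
Qed.


Lemma M_unit : M \in unitmx.
Proof.
have n0 : (#|T|%:R : algC) != 0 by rewrite pnatr_eq0 -lt0n; apply/card_gt0P; exists v0.
have : (#|T|%:R^-1 *: M^T) *m M = 1%:M.
  by rewrite -scalemxAl orthoM scale_scalar_mx mulVf.
by case/mulmx1_unit.
Qed.

Lemma lam_real k : lam k \is Num.real.
Proof.
by apply: rpred_sum => g _; rewrite rpredM ?rpred_nat // /chi chi_real.
Qed.



Lemma pm_ineq (a b : algC) : (a = 1 \/ a = -1) -> (b = 1 \/ b = -1) ->
  2 * (a + b) <= 1 + a + b + a * b.
Proof.
case=> -> [] ->; try by (rewrite le_eqVlt; apply/orP; left; apply/eqP; ring).
have -> : 1 + -1 + -1 + -1 * -1 = 0 :> algC by ring.
have -> : 2 * (-1 + -1) = - 4%:R :> algC by ring.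
by rewrite oppr_le0 ler0n.
Qed.

Lemma pm_nonneg (a b : algC) : (a = 1 \/ a = -1) -> (b = 1 \/ b = -1) ->
  0 <= 1 + a + b + a * b.
Proof.
case=> -> [] ->.
- by have -> : 1 + 1 + 1 + 1 * 1 = 4%:R :> algC by ring.
- by have -> : 1 + 1 + -1 + 1 * -1 = 0 :> algC by ring.
- by have -> : 1 + -1 + 1 + -1 * 1 = 0 :> algC by ring.
- by have -> : 1 + -1 + -1 + -1 * -1 = 0 :> algC by ring.
Qed.

Lemma sum_chi_dot k (j : Iirr G) :
  \sum_(g in G) chi k g * ('chi_j g)^* = #|G|%:R * (cast_ord ET k == j)%:R.
Proof.
have H : '[chi k, 'chi_j] = (cast_ord ET k == j)%:R by rewrite /chi cfdot_irr.
rewrite cfdotE in H.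
have nG : (#|G|%:R : algC) != 0 by rewrite pnatr_eq0 -lt0n cardG_gt0.
by rewrite -H mulVKf.
Qed.

Lemma pair_bound k l : k != l -> cast_ord ET k != 0 -> cast_ord ET l != 0 ->
  2 * (lam k + lam l) <= #|T|%:R - 4.
Proof.
move=> kl k0 l0.
pose F g := 1 + chi k g + chi l g + chi k g * chi l g.
have SF : \sum_(g in G) F g = #|T|%:R.
  rewrite !big_split /= sumr_const -cardTG.
  have -> : \sum_(g in G) chi k g = 0.
    rewrite -[RHS](mulr0 (#|G|%:R : algC)).
    have := sum_chi_dot k 0; rewrite (negbTE k0) => <-.
    by apply: eq_bigr => g gG; rewrite irr0 cfun1E gG conjC1 mulr1.
  have -> : \sum_(g in G) chi l g = 0.
    rewrite -[RHS](mulr0 (#|G|%:R : algC)).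
    have := sum_chi_dot l 0; rewrite (negbTE l0) => <-.
    by apply: eq_bigr => g gG; rewrite irr0 cfun1E gG conjC1 mulr1.
  have -> : \sum_(g in G) chi k g * chi l g = 0.
    rewrite -[RHS](mulr0 (#|G|%:R : algC)).
    have := sum_chi_dot k (cast_ord ET l).
    rewrite (inj_eq (@cast_ord_inj _ _ _)) (negbTE kl) => <-.
    by apply: eq_bigr => g gG; rewrite -/(chi l) chi_conj.
  by rewrite !addr0.
have -> : 2 * (lam k + lam l) = \sum_(g in G) (e v0 (g v0))%:R * (2 * (chi k g + chi l g)).
  rewrite /lam -big_split mulr_sumr; apply: eq_bigr => g _ /=; ring.
rewrite -SF (bigD1 1%g) ?group1 //= [X in _ <= X - _](bigD1 1%g) ?group1 //=.
have e11 : e v0 ((1%g : {perm T}) v0) = false by rewrite perm1; case: He => _ ->.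
have F1 : F 1%g = 4%:R.
  have c1 (m : 'I_#|T|) : chi m 1%g = 1 by apply: lin_char1; apply: (char_abelianP G abG).
  by rewrite /F !c1; ring.
rewrite e11 mul0r add0r F1 addrC addrK.
apply: ler_sum => g /andP[gG _].
have pk := chi_pm (cast_ord ET k) gG; have pl := chi_pm (cast_ord ET l) gG.
case: (e v0 (g v0)); rewrite ?mul1r ?mul0r.
  exact: pm_ineq.
  exact: pm_nonneg.
exact: (group1 G).
Qed.


Lemma count_bound (c : algC) : 0 <= c -> #|T|%:R <= 4 * c ->
  (#|[pred k | (c < lam k)%R]| <= 2)%N.
Proof.
move=> c0 cn.
pose A := [pred k | (c < lam k)%R].
pose P0 := [pred k : 'I_#|T| | cast_ord ET k == 0].
rewrite -(cardID P0 A).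
have H1 : (#|[predI A & P0]| <= 1)%N.
  rewrite leqNgt; apply/negP => /card_gt1P [x [y [/andP[_ /eqP hx] /andP[_ /eqP hy] xy]]].
  by move: xy; rewrite -(inj_eq (@cast_ord_inj _ _ ET)) hx hy eqxx.
have H2 : (#|[predD A & P0]| <= 1)%N.
  rewrite leqNgt; apply/negP => /card_gt1P [x [y [/andP[hx ax] /andP[hy ay] xy]]].
  have := pair_bound xy hx hy.
  have : 2 * (c + c) < 2 * (lam x + lam y).
    by rewrite ltr_pM2l ?ltr0n // ltrD.
  move=> lt1 le1.
  have : 2 * (c + c) < #|T|%:R - 4 := lt_le_trans lt1 le1.
  have -> : 2 * (c + c) = 4 * c by ring.
  move=> lt2.
  have : #|T|%:R - 4 <= (#|T|%:R : algC) by rewrite lerBlDr lerDl ler0n.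
  move=> le3.
  have := lt_le_trans (lt_le_trans lt2 le3) cn.
  by rewrite ltxx.
exact: leq_add H1 H2.
Qed.

Lemma sorted3 (s : seq algC) (c : algC) : c \is Num.real -> 0 <= c ->
  all (fun x => x \is Num.real) s -> sorted (fun x y : algC => (y <= x)%R) s ->
  (count (fun x => (c < x)%R) s <= 2)%N -> nth 0 s 2 <= c.
Proof.
move=> cr c0.
case: s => [|x0 [|x1 [|x2 t]]] //= /and4P[r0 r1 r2 _] /and3P[h1 h2 _].
move=> cnt; rewrite real_leNgt //; apply/negP => lt2.
have lt1 := lt_le_trans lt2 h2.
have lt0 := lt_le_trans lt1 h1.
by move: cnt; rewrite lt0 lt1 lt2.
Qed.

Hypothesis n3 : (3 <= #|T|)%N.

Lemma main_sec : lambda_k (adjmx e) 3 / (#|T|%:R : algC) <= 1 / 3.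
Proof.
have cp : char_poly (adjmx e) = \prod_(k < #|T|) ('X - (lam k)%:P).
  rewrite (char_poly_similar M_unit eigenM) char_poly_trig ?diag_mx_is_trig //.
  by apply: eq_bigr => k _; rewrite !mxE eqxx mulr1n.
rewrite /lambda_k /eigenvalues.
case: (closed_field_poly_normal _) => r /= Hr.
have Hr' : \prod_(z <- r) ('X - z%:P) = \prod_(z <- map lam (index_enum 'I_#|T|)) ('X - z%:P).
  rewrite big_map -cp [in RHS]Hr.
  by rewrite (monicP (char_poly_monic _)) scale1r.
have pr := prod_XsubC_eq Hr'.
have n0 : (0 : algC) < #|T|%:R by rewrite ltr0n; apply: leq_trans n3.
rewrite ler_pdivrMr //.
set c := 1 / 3 * #|T|%:R.
have c0 : 0 <= c by rewrite mulr_ge0 // ?ler0n // divr_ge0 ?ler0n.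
have cr : c \is Num.real by rewrite ger0_real.
have rr : all (fun x => x \is Num.real) r.
  rewrite (seq.perm_all _ pr); apply/allP => x /mapP [k _ ->]; exact: lam_real.
apply: sorted3 => //.
- by rewrite (seq.perm_all _ (permEl (perm_sort _ _))).
- apply: (sort_sorted_in (P := fun x => x \is Num.real)) => //.
  by move=> x y xr yr; rewrite /= orbC; apply: real_leVge.
- rewrite ((seq.permP (permEl (perm_sort _ _))) (fun x => (c < x)%R)).
  rewrite ((seq.permP pr) (fun x => (c < x)%R)) count_map.
  have c0' := c0; rewrite cnt; apply: count_bound c0 _.
  have -> : 4 * c = #|T|%:R + c by rewrite /c; field.
  by rewrite -[X in X <= _]addr0 lerD2l.
Qed.

End Main.

Unset Implicit Arguments.

Theorem corollary3p12 (T : finType) (e : rel T) :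
  simple_graph e ->
  (3 <= #|T|)%N ->
  vertex_transitive e ->
  abelian (graph_aut e) ->
  lambda_k (adjmx e) 3 / (#|T|%:R : algC) <= 1 / 3.
Proof.
move=> He n3 HT Hab.
have /card_gt0P [v0 _] : (0 < #|T|)%N by apply: leq_trans n3.
exact: (main_sec He HT Hab v0 n3).
Qed.
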